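(* Let $y_1,y_2,y_3,y_4$ be the corners of the partially folded Miura parallelogram $y^\sigma_\omega(\Omega)$ (for some admissible $\omega\in[-\pi,\pi]$, $\sigma\in\{+,-\}$), and let $u_a=y_3-y_4$, $u_b=y_2-y_1$, $v_a=y_1-y_4$, $v_b=y_2-y_3$. Let $e\in\mathbb{S}^2$, $z\in\mathbb{R}^3$ with $z\cdot e=0$, $\theta_1,\theta_2\in(-\pi,\pi]$, $\tau_1,\tau_2\in\mathbb{R}$, let $R_\theta$ denote the right-hand rotation about $e$ by angle $\theta$, $P_e=I-e\otimes e$, and $g_i(x)=R_{\theta_i}(x-z)+\tau_i e+z$ ($i=1,2$). If $\theta_1\neq0$, then $$g_1(y_4)=y_1,\quad g_1(y_3)=y_2,\quad g_2(y_1)=y_2,\quad g_2(y_4)=y_3$$ holds if and only if $$\tau_1=v_a\cdot e,\ \ \tau_2=u_a\cdot e,\ \ (u_a-u_b)\cdot e=0,\ \ R_{\theta_1}P_eu_a=P_eu_b,\ \ R_{\theta_2}P_ev_a=P_ev_b,\ \ (I-R_{\theta_1})z=P_e(y_2-R_{\theta_1}y_3).$$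
   Context: Setting. $\{e_1,e_2,e_3\}$ is the standard basis of $\mathbb{R}^3$. Fix $\eta\in(0,\pi)$, $l>0$; set $x_1=0$, $x_2=e_1$, $x_4=l(\cos\eta\,e_1+\sin\eta\,e_2)$, $x_3=x_2+x_4$, and let $\Omega$ be the planar parallelogram with these corners. Fix $\lambda_1,\lambda_2\in(0,1)$ with $(\lambda_2-1)\lambda_2l^2=(\lambda_1-1)\lambda_1$ and let $x_0=\lambda_1x_2+\lambda_2x_4$ (the interior crease vertex). Let $t_i=(x_i-x_0)/|x_i-x_0|$, $n_i=-(t_i\cdot e_2)e_1+(t_i\cdot e_1)e_2$, $\alpha=\arccos(t_1\cdot t_2)$, $\beta=\arccos(t_2\cdot t_3)$, and $R_i(\gamma)=t_i\otimes t_i+\cos\gamma(n_i\otimes n_i+e_3\otimes e_3)+\sin\gamma(e_3\otimes n_i-n_i\otimes e_3)$. Let $\mathcal{A}=\emptyset$ if $\alpha=\beta=\pi/2$, $\{-\}$ if $\alpha=\beta\ne\pi/2$, $\{+\}$ if $\alpha=\pi-\beta\neq\pi/2$, $\{+,-\}$ otherwise. For $\sigma\in\{+,-\}$ (identified with $\pm1$) and $\omega\in[-\pi,\pi]$ the folding angles are: if $\sigma\in\mathcal{A}$, $\gamma_1=-\sigma\bar\gamma_3^\sigma(\omega)$, $\gamma_2=\sigma\omega$, $\gamma_3=\bar\gamma_3^\sigma(\omega)$, $\gamma_4=\omega$ with $\bar\gamma_3^{\sigma}(\omega)=\mathrm{sign}((\cos\alpha-\sigma\cos\beta)\omega)\arccos\big(\frac{(\sigma1-\cos\alpha\cos\beta)\cos\omega+\sin\alpha\sin\beta}{(\sigma1-\cos\alpha\cos\beta)+\sin\alpha\sin\beta\cos\omega}\big)$;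 if $\sigma\notin\mathcal{A}$ (possible only for $\sigma=+,\alpha=\beta$ or $\sigma=-,\alpha=\pi-\beta$), $\gamma_1=\gamma_3=0,\gamma_2=\gamma_4=\omega$ when $\sigma=+$ and $\gamma_1=\gamma_3=\omega,\gamma_2=\gamma_4=0$ when $\sigma=-$. The folded parallelogram $y^\sigma_\omega(\Omega)$ is the piecewise-rigid image of $\Omega$ that is the identity on the triangle $\mathrm{conv}\{x_1,x_0,x_2\}$, equals $x\mapsto R_2(\gamma_2)(x-x_0)+x_0$ on $\mathrm{conv}\{x_2,x_0,x_3\}$, $x\mapsto R_2(\gamma_2)R_3(\gamma_3)(x-x_0)+x_0$ on $\mathrm{conv}\{x_3,x_0,x_4\}$ and $x\mapsto R_1(-\gamma_1)(x-x_0)+x_0$ on $\mathrm{conv}\{x_4,x_0,x_1\}$. Its corners are $y_1=x_1$, $y_2=x_2$, $y_3=x_0+R_2(\gamma_2)(x_3-x_0)$, $y_4=x_0+R_2(\gamma_2)R_3(\gamma_3)(x_4-x_0)$. *)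

(* Defs.v *)
From Stdlib Require Import Reals Lra.
Open Scope R_scope.

Record vec3 := V3 { vx : R; vy : R; vz : R }.

Definition vadd (a b : vec3) : vec3 := V3 (vx a + vx b) (vy a + vy b) (vz a + vz b).
Definition vscale (c : R) (a : vec3) : vec3 := V3 (c * vx a) (c * vy a) (c * vz a).
Definition vopp (a : vec3) : vec3 := vscale (-1) a.
Definition vsub (a b : vec3) : vec3 := vadd a (vopp b).
Definition vzero : vec3 := V3 0 0 0.
Definition dot (a b : vec3) : R := vx a * vx b + vy a * vy b + vz a * vz b.
Definition cross (a b : vec3) : vec3 :=
  V3 (vy a * vz b - vz a * vy b) (vz a * vx b - vx a * vz b) (vx a * vy b - vy a * vx b).
Definition vnorm (a : vec3) : R := sqrt (dot a a).

Definition e1 : vec3 := V3 1 0 0.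
Definition e2 : vec3 := V3 0 1 0.
Definition e3 : vec3 := V3 0 0 1.

Definition sgn (x : R) : R :=
  if Rlt_dec 0 x then 1 else if Rlt_dec x 0 then -1 else 0.

Definition px1 : vec3 := vzero.
Definition px2 : vec3 := e1.
Definition px4 (eta l : R) : vec3 := vscale l (vadd (vscale (cos eta) e1) (vscale (sin eta) e2)).
Definition px3 (eta l : R) : vec3 := vadd px2 (px4 eta l).
Definition px0 (eta l lam1 lam2 : R) : vec3 := vadd (vscale lam1 px2) (vscale lam2 (px4 eta l)).

Definition pcorner (eta l : R) (i : nat) : vec3 :=
  match i with 1 => px1 | 2 => px2 | 3 => px3 eta l | _ => px4 eta l end.

Definition tvec (eta l lam1 lam2 : R) (i : nat) : vec3 :=
  let d := vsub (pcorner eta l i) (px0 eta l lam1 lam2) in vscale (/ vnorm d) d.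
Definition nvec (eta l lam1 lam2 : R) (i : nat) : vec3 :=
  let t := tvec eta l lam1 lam2 i in
  vadd (vscale (- dot t e2) e1) (vscale (dot t e1) e2).

Definition alpha (eta l lam1 lam2 : R) : R :=
  acos (dot (tvec eta l lam1 lam2 1) (tvec eta l lam1 lam2 2)).
Definition beta (eta l lam1 lam2 : R) : R :=
  acos (dot (tvec eta l lam1 lam2 2) (tvec eta l lam1 lam2 3)).

(* R_i(gamma) = t_i (x) t_i + cos g (n_i (x) n_i + e3 (x) e3)
                 + sin g (e3 (x) n_i - n_i (x) e3), with (a (x) b) x = (b.x) a *)
Definition Rfold (eta l lam1 lam2 : R) (i : nat) (g : R) (x : vec3) : vec3 :=
  let t := tvec eta l lam1 lam2 i in
  let n := nvec eta l lam1 lam2 i in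
  vadd (vscale (dot t x) t)
   (vadd (vscale (cos g) (vadd (vscale (dot n x) n) (vscale (dot e3 x) e3)))
         (vscale (sin g) (vsub (vscale (dot n x) e3) (vscale (dot e3 x) n)))).

(** sigma : bool, true = '+' (= +1), false = '-' (= -1). *)
Definition sigR (s : bool) : R := if s then 1 else -1.

(* membership of sigma in the set A of the paper:
   A = {} if a = b = pi/2; {-} if a = b <> pi/2; {+} if a = pi - b <> pi/2;
   {+,-} otherwise. *)
Definition inA (a b : R) (s : bool) : Prop :=
  (a = PI/2 /\ b = PI/2 /\ False) \/
  (~ (a = PI/2 /\ b = PI/2) /\ (a = b /\ b <> PI/2) /\ s = false) \/
  (~ (a = PI/2 /\ b = PI/2) /\ (a = PI - b /\ a <> PI/2) /\ s = true) \/
  (~ (a = PI/2 /\ b = PI/2) /\ ~ (a = b /\ b <> PI/2) /\ ~ (a = PI - b /\ a <> PI/2)).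

Definition gamma3bar (a b : R) (s : bool) (w : R) : R :=
  let sg := sigR s in
  sgn ((cos a - sg * cos b) * w) *
  acos (((sg - cos a * cos b) * cos w + sin a * sin b) /
        ((sg - cos a * cos b) + sin a * sin b * cos w)).

Definition folding_angles (a b : R) (s : bool) (w : R) : R * R * R * R :=
  (- sigR s * gamma3bar a b s w, sigR s * w, gamma3bar a b s w, w).

Definition folding_angles_notA (s : bool) (w : R) : R * R * R * R :=
  if s then (0, w, 0, w) else (w, 0, w, 0).

Definition is_folding_angles (eta l lam1 lam2 : R) (s : bool) (w : R)
  (G : R * R * R * R) : Prop :=
  let a := alpha eta l lam1 lam2 in
  let b := beta eta l lam1 lam2 in
  (inA a b s -> G = folding_angles a b s w) /\
  (~ inA a b s -> G = folding_angles_notA s w).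

Definition fcorner (eta l lam1 lam2 : R) (G : R * R * R * R) (i : nat) : vec3 :=
  let '(g1, g2, g3, g4) := G in
  let x0 := px0 eta l lam1 lam2 in
  match i with
  | 1 => px1
  | 2 => px2
  | 3 => vadd x0 (Rfold eta l lam1 lam2 2 g2 (vsub (px3 eta l) x0))
  | _ => vadd x0 (Rfold eta l lam1 lam2 2 g2
                    (Rfold eta l lam1 lam2 3 g3 (vsub (px4 eta l) x0)))
  end.

(* right-hand rotation about the unit axis e by angle th (Rodrigues) *)
Definition rot (e : vec3) (th : R) (x : vec3) : vec3 :=
  vadd (vscale (cos th) x)
    (vadd (vscale (sin th) (cross e x)) (vscale ((1 - cos th) * dot e x) e)).

Definition proj (e : vec3) (x : vec3) : vec3 := vsub x (vscale (dot e x) e).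

Definition screw (e z : vec3) (th tau : R) (x : vec3) : vec3 :=
  vadd (vadd (rot e th (vsub x z)) (vscale tau e)) z.

(* Main.v *)
Require Import Defs.
From Stdlib Require Import Reals Lra Nsatz.
Open Scope R_scope.

Ltac comps := repeat match goal with v : vec3 |- _ => destruct v end;
  unfold screw, rot, proj, vsub, vopp, vadd, vscale, dot, cross in *; simpl in *.

Lemma veq a b c a' b' c' : a = a' -> b = b' -> c = c' -> V3 a b c = V3 a' b' c'.
Proof. intros; subst; auto. Qed.

Lemma rot_add e t x y : rot e t (vadd x y) = vadd (rot e t x) (rot e t y).
Proof. comps; apply veq; ring. Qed.
Lemma rot_sub e t x y : rot e t (vsub x y) = vsub (rot e t x) (rot e t y).
Proof. comps; apply veq; ring. Qed.
Lemma proj_add e x y : proj e (vadd x y) = vadd (proj e x) (proj e y).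
Proof. comps; apply veq; ring. Qed.
Lemma proj_sub e x y : proj e (vsub x y) = vsub (proj e x) (proj e y).
Proof. comps; apply veq; ring. Qed.
Lemma dot_add x y e : dot (vadd x y) e = dot x e + dot y e.
Proof. comps; ring. Qed.
Lemma dot_sub x y e : dot (vsub x y) e = dot x e - dot y e.
Proof. comps; ring. Qed.
Lemma proj_rot e t x : dot e e = 1 -> proj e (rot e t x) = rot e t (proj e x).
Proof. comps; intro H; apply veq; nsatz. Qed.
Lemma dot_rot e t x : dot e e = 1 -> dot (rot e t x) e = dot x e.
Proof. comps; intro H; nsatz. Qed.
Lemma dot_proj e x : dot e e = 1 -> dot (proj e x) e = 0.
Proof. comps; intro H; nsatz. Qed.
Lemma proj_z e z : dot z e = 0 -> proj e z = z.
Proof. comps; intro H; apply veq; nsatz. Qed.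
Lemma rot_comm e t1 t2 x : dot e e = 1 -> rot e t2 (rot e t1 x) = rot e t1 (rot e t2 x).
Proof. comps; intro H; apply veq; nsatz. Qed.
Lemma dot_screw e z t tau x : dot e e = 1 -> dot z e = 0 ->
  dot (screw e z t tau x) e = dot x e + tau.
Proof. comps; intros H H'; nsatz. Qed.
Lemma proj_screw e z t tau x : dot e e = 1 -> dot z e = 0 ->
  proj e (screw e z t tau x) = vadd (rot e t (vsub (proj e x) z)) z.
Proof. comps; intros H H'; apply veq; nsatz. Qed.
Lemma decomp e x y : dot x e = dot y e -> proj e x = proj e y -> x = y.
Proof. comps; intros H H'; injection H' as H1 H2 H3; apply veq; nsatz. Qed.

Lemma cos_ne1 t : -PI < t <= PI -> t <> 0 -> cos t <> 1.
Proof. intros Ht Hn Hc.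
  assert (E : cos t = 1 - 2 * sin (t/2) * sin (t/2)).
  { rewrite <- cos_2a_sin. f_equal. field. }
  assert (sin (t/2) <> 0).
  { destruct (Rlt_dec 0 t).
    - assert (0 < sin (t/2)) by (apply sin_gt_0; lra). lra.
    - assert (0 < sin (-(t/2))) by (apply sin_gt_0; lra). rewrite sin_neg in H. lra. }
  assert (sin (t/2) * sin (t/2) = 0) by lra.
  apply H. destruct (Rmult_integral _ _ H0); auto.
Qed.

Lemma fix_zero e t w : dot e e = 1 -> cos t <> 1 -> dot w e = 0 -> rot e t w = w -> w = vzero.
Proof. intros He Hc Hw Hr.
  assert (K : dot (rot e t w) w = cos t * dot w w + (1 - cos t) * (dot e w)^2).
  { comps. nsatz. }
  rewrite Hr in K.
  assert (dot e w = 0) by (rewrite <- Hw; comps; ring).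
  rewrite H in K.
  assert (dot w w = 0).
  { apply (Rmult_eq_reg_l (1 - cos t)); [|lra]. lra. }
  comps. apply veq; nra.
Qed.

Ltac vsplit := repeat match goal with H : @eq vec3 _ _ |- _ =>
   pose proof (f_equal vx H); pose proof (f_equal vy H); pose proof (f_equal vz H); clear H end;
   cbn [vx vy vz vadd vsub vopp vscale vzero] in *.

Ltac lin He Hz := repeat (rewrite ?rot_add, ?rot_sub, ?proj_add, ?proj_sub, ?(proj_rot _ _ _ He), ?(proj_z _ _ Hz) in *).

Lemma vext a b : vx a = vx b -> vy a = vy b -> vz a = vz b -> a = b.
Proof. destruct a, b; simpl; intros; subst; auto. Qed.

Lemma gen (e z y1 y2 y3 y4 : vec3) (th1 th2 tau1 tau2 : R) :
  dot e e = 1 -> dot z e = 0 -> cos th1 <> 1 ->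
  let ua := vsub y3 y4 in
  let ub := vsub y2 y1 in
  let va := vsub y1 y4 in
  let vb := vsub y2 y3 in
  let g1 := screw e z th1 tau1 in
  let g2 := screw e z th2 tau2 in
  (g1 y4 = y1 /\ g1 y3 = y2 /\ g2 y1 = y2 /\ g2 y4 = y3) <->
  (tau1 = dot va e /\ tau2 = dot ua e /\ dot (vsub ua ub) e = 0 /\
   rot e th1 (proj e ua) = proj e ub /\
   rot e th2 (proj e va) = proj e vb /\
   vsub z (rot e th1 z) = proj e (vsub y2 (rot e th1 y3))).
Proof.
  intros He Hz Hc ua ub va vb g1 g2. subst ua ub va vb g1 g2. split.
  - intros [H1 [H2 [H3 H4]]].
    pose proof (f_equal (fun v => dot v e) H1) as D1.
    pose proof (f_equal (fun v => dot v e) H2) as D2.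
    pose proof (f_equal (fun v => dot v e) H3) as D3.
    pose proof (f_equal (fun v => dot v e) H4) as D4.
    cbv beta in D1, D2, D3, D4.
    rewrite (dot_screw _ _ _ _ _ He Hz) in D1; rewrite (dot_screw _ _ _ _ _ He Hz) in D2; rewrite (dot_screw _ _ _ _ _ He Hz) in D3; rewrite (dot_screw _ _ _ _ _ He Hz) in D4.
    apply (f_equal (proj e)) in H1, H2, H3, H4.
    rewrite (proj_screw _ _ _ _ _ He Hz) in H1; rewrite (proj_screw _ _ _ _ _ He Hz) in H2; rewrite (proj_screw _ _ _ _ _ He Hz) in H3; rewrite (proj_screw _ _ _ _ _ He Hz) in H4.
    split; [rewrite dot_sub; lra|].
    split; [rewrite dot_sub; lra|].
    split; [rewrite !dot_sub; lra|].
    lin He Hz. vsplit.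
    split; [apply vext; cbn [vx vy vz vadd vsub vopp vscale]; lra|].
    split; [apply vext; cbn [vx vy vz vadd vsub vopp vscale]; lra|].
    apply vext; cbn [vx vy vz vadd vsub vopp vscale]; lra.
  - intros [T1 [T2 [T3 [H4 [H5 H6]]]]].
    rewrite !dot_sub in T1; rewrite !dot_sub in T2; rewrite !dot_sub in T3.
    set (w := vsub (vadd (rot e th2 (vsub (proj e y1) z)) z) (proj e y2)).
    assert (Hwe : dot w e = 0).
    { unfold w. rewrite dot_sub, dot_add, (dot_rot _ _ _ He), dot_sub, !(dot_proj _ _ He), Hz. ring. }
    assert (Hrw : rot e th1 w = w).
    { pose proof (f_equal (rot e th2) H6) as H6'.
      pose proof (f_equal (rot e th1) H5) as H5'.
      pose proof (f_equal (rot e th2) H4) as H4'.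
      unfold w. lin He Hz.
      repeat rewrite ?(rot_comm e th1 th2 _ He) in *.
      lin He Hz.
      vsplit. apply vext; cbn [vx vy vz vadd vsub vopp vscale]; lra. }
    pose proof (fix_zero _ _ _ He Hc Hwe Hrw) as Hw0. unfold w in Hw0.
    lin He Hz.
    split; [|split; [|split]]; apply (decomp e); rewrite ?(dot_screw _ _ _ _ _ He Hz); try lra;
      rewrite (proj_screw _ _ _ _ _ He Hz); lin He Hz; vsplit;
      apply vext; cbn [vx vy vz vadd vsub vopp vscale]; lra.
Qed.

Theorem mainTheorem3
  (eta l lam1 lam2 : R) (sigma : bool) (omega : R) (G : R * R * R * R)
  (e z : vec3) (th1 th2 tau1 tau2 : R) :
  0 < eta < PI -> 0 < l ->
  0 < lam1 < 1 -> 0 < lam2 < 1 ->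
  (lam2 - 1) * lam2 * l ^ 2 = (lam1 - 1) * lam1 ->
  -PI <= omega <= PI ->
  is_folding_angles eta l lam1 lam2 sigma omega G ->
  vnorm e = 1 -> dot z e = 0 ->
  -PI < th1 <= PI -> -PI < th2 <= PI ->
  th1 <> 0 ->
  let y1 := fcorner eta l lam1 lam2 G 1 in
  let y2 := fcorner eta l lam1 lam2 G 2 in
  let y3 := fcorner eta l lam1 lam2 G 3 in
  let y4 := fcorner eta l lam1 lam2 G 4 in
  let ua := vsub y3 y4 in
  let ub := vsub y2 y1 in
  let va := vsub y1 y4 in
  let vb := vsub y2 y3 in
  let g1 := screw e z th1 tau1 in
  let g2 := screw e z th2 tau2 in
  (g1 y4 = y1 /\ g1 y3 = y2 /\ g2 y1 = y2 /\ g2 y4 = y3) <->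
  (tau1 = dot va e /\ tau2 = dot ua e /\ dot (vsub ua ub) e = 0 /\
   rot e th1 (proj e ua) = proj e ub /\
   rot e th2 (proj e va) = proj e vb /\
   vsub z (rot e th1 z) = proj e (vsub y2 (rot e th1 y3))).
Proof.
  intros _ _ _ _ _ _ _ Hn Hz Ht1 _ Hn0 y1 y2 y3 y4.
  assert (He : dot e e = 1).
  { unfold vnorm in Hn. assert (0 <= dot e e) by (destruct e; unfold dot; simpl; nra).
    rewrite <- (sqrt_sqrt (dot e e)) by exact H. rewrite Hn. ring. }
  exact (gen e z y1 y2 y3 y4 th1 th2 tau1 tau2 He Hz (cos_ne1 th1 Ht1 Hn0)).
Qed.
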